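(* Let $G$, $\varkappa$, $\mathcal K=\mathcal K(G,\varkappa)$ and let $\succ$ be any hereditary ordering of $\mathcal K$ produced by the construction described in the context. Let $\rho\in\mathcal K$, $\rho\ne\emptyset$, let $v\in\mathbb V_\rho$, and suppose $\mathbb V_\rho(v)\ne\emptyset$. Then there is a vertex $u\in\mathbb V_\rho(v)$ such that $|g_{wz}-1|\le|g_{uv}-1|$ for all $w,z\in\mathbb V_\rho(v)\cup\{v\}$.
   Context: $G=(g_{uv})_{1\le u,v\le m}$ is a symmetric complex matrix with units on the diagonal and $\varkappa>0$. $\Gamma(G,\varkappa)$ is the graph on $[m]=\{1,\dots,m\}$ with $\{u,v\}$ an edge iff $|g_{uv}-1|<\varkappa$, and $\mathcal K=\mathcal K(G,\varkappa)$ is its clique complex. For a strict total ordering $\succ$ of $\mathcal K$ and non-empty $\sigma$, $\mu(\sigma)$ is the $\succ$-largest facet of $\sigma$. Construction of $\succ$: simplices of larger dimension are larger; vertices are ordered arbitrarily; assuming $\succ$ is defined on $(s-1)$-simplices, for $s$-simplices put $\sigma\succ\tau$ if $\mu(\sigma)\succ\mu(\tau)$; for each $(s-1)$-simplex $\rho$, let $\mathbb V_\rho$ be the set of vertices $v\notin\rho$ with $\rho\cup\{v\}\in\mathcal K$ and $\mu(\rho\cup\{v\})=\rho$, $t=|\mathbb V_\rho|$; choose $v_1,\dots,v_t$ successively: for $j<t$, among pairs $w\ne z$ in $\mathbb V_\rho\setminus\{v_1,\dots,v_{j-1}\}$ pick a pair $(w^0,z^0)$ maximizing $|g_{wz}-1|$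 (ties broken arbitrarily) and set $v_j=w^0$; $v_t$ is the remaining vertex; then put $\rho\cup\{v_1\}\succ\rho\cup\{v_2\}\succ\dots\succ\rho\cup\{v_t\}$. For $v\in\mathbb V_\rho$, $\mathbb V_\rho(v)$ is the set of $u\in\mathbb V_\rho$ with $\rho\cup\{v\}\succ\rho\cup\{u\}$. *)

(* Defs.v *)
From HB Require Import structures.
From mathcomp Require Import all_boot all_order all_algebra.
From mathcomp Require Import reals complex.
Set Implicit Arguments. Unset Strict Implicit. Unset Printing Implicit Defensive.
Import Order.TTheory GRing.Theory Num.Theory.
Local Open Scope ring_scope.

Section Defs.
Variables (R : realType) (m : nat).
Implicit Types (G : 'M[R[i]]_m) (kappa : R) (sigma rho tau : {set 'I_m}).

Definition gedge G kappa (u v : 'I_m) : bool :=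
  (u != v) && (`|G u v - 1| < (kappa%:C)%C).

(* the clique complex K(G,kappa): sets of vertices that are cliques
   (the empty simplex included) *)
Definition inK G kappa sigma : bool :=
  [forall u in sigma, forall v in sigma, (u != v) ==> gedge G kappa u v].

Definition strict_total_on_K G kappa (succ : rel {set 'I_m}) : Prop :=
  [/\ (forall s, inK G kappa s -> ~~ succ s s),
      (forall s t u, inK G kappa s -> inK G kappa t -> inK G kappa u ->
         succ s t -> succ t u -> succ s u) &
      (forall s t, inK G kappa s -> inK G kappa t -> s != t ->
         succ s t || succ t s)].

Definition facet tau sigma : bool :=
  (tau \subset sigma) && (#|tau| == #|sigma|.-1) && (0 < #|sigma|)%N.

Definition mu (succ : rel {set 'I_m}) sigma : {set 'I_m} :=
  odflt set0 [pick rho | facet rho sigma &&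
     [forall tau, (facet tau sigma && (tau != rho)) ==> succ rho tau]].

Definition Vrho G kappa (succ : rel {set 'I_m}) rho : {set 'I_m} :=
  [set v | (v \notin rho) && inK G kappa (v |: rho) && (mu succ (v |: rho) == rho)].

Definition Vrho_v G kappa (succ : rel {set 'I_m}) rho (v : 'I_m) : {set 'I_m} :=
  [set u in Vrho G kappa succ rho | succ (v |: rho) (u |: rho)].

(* The ordering of the rho u {v}, v in V_rho, is given by a greedy sequence
   v_1,...,v_t (0-indexed below): for j < t, v_j = w0 for a pair w0 <> z0 of
   remaining vertices maximizing |g_wz - 1|, and
   rho u {v_1} > rho u {v_2} > ... > rho u {v_t}. *)
Definition greedy_block G kappa (succ : rel {set 'I_m}) rho : Prop :=
  exists vs : seq 'I_m,
    [/\ uniq vs,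
        [set x in vs] = Vrho G kappa succ rho,
        (forall x y, x \in vs -> y \in vs ->
           succ (x |: rho) (y |: rho) = (index x vs < index y vs)%N) &
        (forall j (vj : 'I_m) rest, (j < (size vs).-1)%N -> drop j vs = vj :: rest ->
           exists w0 z0, [/\ w0 \in vj :: rest, z0 \in vj :: rest, w0 != z0,
             (forall w z, w \in vj :: rest -> z \in vj :: rest -> w != z ->
                `|G w z - 1| <= `|G w0 z0 - 1|) &
             vj = w0])].

Definition constructed_order G kappa (succ : rel {set 'I_m}) : Prop :=
  [/\ strict_total_on_K G kappa succ,
      (forall s t, inK G kappa s -> inK G kappa t -> (#|t| < #|s|)%N -> succ s t),
      (forall s t, inK G kappa s -> inK G kappa t -> #|s| = #|t| -> (2 <= #|s|)%N ->
         succ (mu succ s) (mu succ t) -> succ s t) &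
      (forall rho, inK G kappa rho -> rho != set0 -> greedy_block G kappa succ rho)].

End Defs.

(* Main.v *)
Require Import Defs.
From HB Require Import structures.
From mathcomp Require Import all_boot all_order all_algebra.
From mathcomp Require Import reals complex zify.
Import Order.TTheory GRing.Theory Num.Theory.
Local Open Scope ring_scope.

Lemma idx_drop (T : eqType) (s : seq T) j x : uniq s -> x \in s ->
  (x \in drop j s) = (j <= index x s)%N.
Proof.
move=> Us xs.
have Ud : uniq (take j s ++ drop j s) by rewrite cat_take_drop.
move: Ud; rewrite cat_uniq => /and3P[_ Hdis _].
rewrite -[in RHS](cat_take_drop j s) index_cat.
case: (boolP (x \in take j s)) => Ht.
  have -> : (x \in drop j s) = false.
    apply/negbTE/negP => xd; move/negP: Hdis; apply; apply/hasP; by exists x.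
  have := index_mem x (take j s); rewrite Ht size_take => H.
  apply/esym/negbTE; rewrite -ltnNge.
  by case: (ltnP j (size s)) H => Hj H; lia.
have xd : x \in drop j s by move: xs; rewrite -{1}(cat_take_drop j s) mem_cat (negbTE Ht).
rewrite xd size_take; case: (ltnP j (size s)) => Hs; first by rewrite leq_addr.
by move: xd; rewrite drop_oversize.
Qed.

Theorem lemma8 (R : realType) (m : nat) (G : 'M[R[i]]_m) (kappa : R)
  (succ : rel {set 'I_m}) (rho : {set 'I_m}) (v : 'I_m) :
  G^T = G -> (forall u, G u u = 1) -> 0 < kappa ->
  constructed_order G kappa succ ->
  inK G kappa rho -> rho != set0 ->
  v \in Vrho G kappa succ rho ->
  Vrho_v G kappa succ rho v != set0 ->
  exists2 u, u \in Vrho_v G kappa succ rho v &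
    forall w z, w \in v |: Vrho_v G kappa succ rho v ->
                z \in v |: Vrho_v G kappa succ rho v ->
      `|G w z - 1| <= `|G u v - 1|.
Proof.
move=> GT Gd kp [tot _ _ Hg] rK rne vV Vne.
have [vs [Us Svs Hidx Hgr]] := Hg rho rK rne.
have memV x : (x \in Vrho G kappa succ rho) = (x \in vs) by rewrite -Svs inE.
have vvs : v \in vs by rewrite -memV.
have memVv x : (x \in Vrho_v G kappa succ rho v) =
    (x \in vs) && (index v vs < index x vs)%N.
  rewrite /Vrho_v inE memV; case: (boolP (x \in vs)) => // xin.
  by rewrite Hidx.
set j := index v vs.
have memS x : (x \in v |: Vrho_v G kappa succ rho v) = (x \in drop j vs).
  rewrite in_setU1 memVv.
  case: (boolP (x \in vs)) => xin; last first.
    have xv : x != v by apply: contraNneq xin => ->.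
    rewrite /= orbF (negbTE xv); apply/esym/negbTE; apply: contra xin.
    by move=> /mem_drop.
  rewrite idx_drop // andTb [in RHS]leq_eqVlt.
  case: (boolP (x == v)) => [/eqP xv|xv]; first by subst x; rewrite eqxx.
  case: (boolP (j == index x vs)) => //= /eqP E.
  by move: xv; rewrite (index_inj v vvs xin E) eqxx.
have [u0 u0V] : exists u0, u0 \in Vrho_v G kappa succ rho v.
  by apply/set0Pn.
have jlt : (j < (size vs).-1)%N.
  move: u0V; rewrite memVv => /andP[u0in lt].
  have := index_mem u0 vs; rewrite u0in => H.
  rewrite /j; move: lt H; case: (size vs) => // n; lia.
have jlt' : (j < size vs)%N by rewrite /j index_mem.
have Hd : drop j vs = v :: drop j.+1 vs by rewrite (drop_nth v jlt') nth_index.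
have [w0 [z0 [w0in z0in wz Hmax vw]]] := Hgr j v (drop j.+1 vs) jlt Hd.
subst w0.
exists z0.
  have : z0 \in v |: Vrho_v G kappa succ rho v by rewrite memS Hd.
  by rewrite in_setU1 eq_sym (negbTE wz).
move=> w z; rewrite !memS Hd => wi zi.
have -> : G z0 v = G v z0 by rewrite -[in LHS]GT mxE.
case: (boolP (w == z)) => [/eqP->|wzn]; first by rewrite Gd subrr normr0 normr_ge0.
exact: Hmax.
Qed.
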